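(* Let $(W,S)$ be a Coxeter system with $S$ finite, $\phi:\operatorname{Ad}(Q_W)\to W$ the homomorphism $e_x\mapsto x$, and $C_W=\ker\phi$. Then the central extension $1\to C_W\to\operatorname{Ad}(Q_W)\xrightarrow{\phi}W\to1$ is nontrivial (i.e. not split as a direct product $C_W\times W$); equivalently its class $u_\phi\in H^2(W,C_W)$ is nonzero.
   Context: A Coxeter system $(W,S)$: $S$ finite, $m:S\times S\to\mathbb{N}\cup\{\infty\}$ with $m(s,s)=1$, $2\le m(s,t)=m(t,s)\le\infty$ for $s\ne t$, $W=\langle s\in S\mid (st)^{m(s,t)}=1\ (m(s,t)<\infty)\rangle$. The Coxeter quandle is $Q_W=\bigcup_{w\in W}w^{-1}Sw$ with $x\ast y=yxy$, and $\operatorname{Ad}(Q_W)=\langle e_x\ (x\in Q_W)\mid e_y^{-1}e_xe_y=e_{x\ast y}\rangle$. $C_W$ is a central subgroup of $\operatorname{Ad}(Q_W)$. *)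

(* Defs.v *)
From HB Require Import structures.
From mathcomp Require Import all_boot.
Set Implicit Arguments. Unset Strict Implicit. Unset Printing Implicit Defensive.

Local Open Scope group_scope.

Definition is_group_hom (G H : groupType) (f : G -> H) : Prop :=
  forall x y : G, f (x * y) = f x * f y.

(* Coxeter matrix on a finite set S; [None] encodes m(s,t) = infinity. *)
Definition coxeter_matrix (S : finType) (m : S -> S -> option nat) : Prop :=
  [/\ forall s, m s s = Some 1%N,
      forall s t, m s t = m t s
    & forall s t k, s <> t -> m s t = Some k -> (2 <= k)%N].

Definition coxeter_rels (S : finType) (m : S -> S -> option nat)
    (H : groupType) (f : S -> H) : Prop :=
  forall s t k, m s t = Some k -> (f s * f t) ^+ k = 1.

Definition is_coxeter_group (S : finType) (m : S -> S -> option nat)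
    (W : groupType) (sW : S -> W) : Prop :=
  coxeter_rels m sW /\
  forall (H : groupType) (f : S -> H), coxeter_rels m f ->
    exists g : W -> H,
      [/\ is_group_hom g, forall s, g (sW s) = f s
        & forall g' : W -> H, is_group_hom g' -> (forall s, g' (sW s) = f s) ->
            forall w, g' w = g w].

Definition in_coxeter_quandle (S : finType) (W : groupType) (sW : S -> W)
    (x : W) : Prop :=
  exists (w : W) (s : S), x = w^-1 * sW s * w.

Definition adjoint_rels (W : groupType) (Q : W -> Prop)
    (H : groupType) (f : W -> H) : Prop :=
  forall x y, Q x -> Q y -> (f y)^-1 * f x * f y = f (y * x * y).

(* (A, e) is Ad(Q) = < e_x (x in Q) | e_y^-1 e_x e_y = e_{x*y} >, given by its
   universal property (only the values of e on Q are relevant). *)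
Definition is_adjoint_group (W : groupType) (Q : W -> Prop)
    (A : groupType) (e : W -> A) : Prop :=
  adjoint_rels Q e /\
  forall (H : groupType) (f : W -> H), adjoint_rels Q f ->
    exists g : A -> H,
      [/\ is_group_hom g, forall x, Q x -> g (e x) = f x
        & forall g' : A -> H, is_group_hom g' -> (forall x, Q x -> g' (e x) = f x) ->
            forall a, g' a = g a].

(* Main.v *)
Require Import Defs.
From HB Require Import structures.
From mathcomp Require Import all_boot.
From mathcomp Require Import fingroup zmodp.

Local Open Scope group_scope.

Lemma I4C (a b : 'I_4) : a * b = b * a.
Proof. exact: Zp_mulgC. Qed.
Definition z1 : 'I_4 := inZp 1.
Definition z2 : 'I_4 := inZp 2.
Lemma z11 : z1 * z1 = z2. Proof. by apply/eqP. Qed.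
Lemma z22 : z2 * z2 = 1. Proof. by apply/eqP. Qed.
Lemma z2n : z2 <> 1. Proof. by []. Qed.
Lemma z1r : z1^-1 * z1 * z1 = z1. Proof. by apply/eqP. Qed.
Lemma z2r : z2^-1 * z2 * z2 = z2. Proof. by apply/eqP. Qed.

Lemma hom1 (G H : groupType) (f : G -> H) : is_group_hom f -> f 1 = 1.
Proof. move=> h; apply: (@mulgI _ (f 1)); by rewrite mulg1 -h mulg1. Qed.

Theorem lemma4p1 (S : finType) (m : S -> S -> option nat)
    (W : groupType) (sW : S -> W) (A : groupType) (e : W -> A) (phi : A -> W) :
  coxeter_matrix m ->
  (0 < #|S|)%N ->
  is_coxeter_group m sW ->
  is_adjoint_group (in_coxeter_quandle sW) e ->
  is_group_hom phi ->
  (forall x, in_coxeter_quandle sW x -> phi (e x) = x) ->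
  ~ (exists sigma : W -> A, is_group_hom sigma /\ forall w, phi (sigma w) = w).
Proof.
move=> [m1 _ _] /card_gt0P [s _] [Wr Wu] [_ Au] hphi phie [sig [hsig sigK]].
have cr : coxeter_rels m (fun _ => z2) by move=> ? ? k _; rewrite z22 expg1n.
have [eps [heps epsS _]] := Wu ('I_4 : groupType) (fun _ => z2) cr.
have [deg [hdeg degE _]] := Au ('I_4 : groupType) (fun _ => z1)
  (fun x y _ _ => z1r).
have [g [_ _ gU]] := Au ('I_4 : groupType) (fun _ => z2)
  (fun x y _ _ => z2r).
have key : forall a, eps (phi a) = deg a * deg a.
  move=> a.
  have -> : eps (phi a) = g a.
    apply: (gU (fun a => eps (phi a))).
      by move=> x y; rewrite hphi heps.
    move=> x [w [t ->]]; rewrite phie; last by exists w, t.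
    rewrite !heps epsS.
    rewrite [eps w^-1 * z2]I4C -mulgA -heps mulVg hom1 // mulg1 //.
  rewrite -(gU (fun a => deg a * deg a)) //.
    move=> x y; rewrite hdeg !mulgA; congr (_ * _).
    by rewrite -!mulgA; congr (_ * _); rewrite I4C.
  by move=> x Qx; rewrite degE // z11.
have ss : sW s * sW s = 1.
  by have := Wr s s 1%N (m1 s); rewrite expg1.
have hs : deg (sig (sW s)) * deg (sig (sW s)) = 1.
  by rewrite -hdeg -hsig ss hom1 // hom1.
apply: z2n; by rewrite -(epsS s) -{1}(sigK (sW s)) key.
Qed.
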